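(* TDS is co-recursively-enumerable, i.e., the set of TDS instances that have no solution is recursively enumerable.
   Context: An instance of TDS consists of a rational discount factor $0<\lambda<1$, a rational target $t$, and rational weights $a,b$; a solution is an infinite sequence $w\in\{a,b\}^\omega$ with $\sum_{i=0}^\infty w(i)\lambda^i=t$. *)

(* Defs.v *)
From Stdlib Require Import QArith Reals List.
Import ListNotations.

(** A solution: an infinite word w over {a,b}, encoded as w : nat -> bool
    (true = letter a, false = letter b), with sum_{i>=0} w(i) lambda^i = t
    (the series is understood in the reals). *)
Definition tds_weight (a b : Q) (w : nat -> bool) (i : nat) : Q :=
  if w i then a else b.

Definition tds_solution (lam t a b : Q) (w : nat -> bool) : Prop :=
  infinite_sum (fun i => Q2R (tds_weight a b w i) * (Q2R lam) ^ i)%R (Q2R t).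

Definition tds_valid_instance (lam : Q) : Prop := (0 < lam /\ lam < 1)%Q.

Definition tds_has_solution (lam t a b : Q) : Prop :=
  exists w : nat -> bool, tds_solution lam t a b w.

(** * A model of computation: first-order recursive programs over exact
    rational arithmetic (mutually recursive functions, general recursion),
    with a fuel-indexed evaluator.  This is a Turing-complete model whose
    primitives (exact +, *, -, ^-1, <=, test for 0 on rationals) are all
    computable, so the domain of a program is a recursively enumerable set. *)
Inductive expr : Type :=
| EVar (i : nat)                      (* i-th argument of the current function *)
| EConst (q : Q)
| EAdd (e1 e2 : expr)
| EMul (e1 e2 : expr)
| EOpp (e : expr)
| EInv (e : expr)                     (* Qinv, with Qinv 0 = 0 *)
| ELe (e1 e2 : expr)                  (* 1 if e1 <= e2, else 0 *)
| EIf (c e1 e2 : expr)                (* e1 if c <> 0, else e2 *)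
| ECall (f : nat) (args : list expr).

(** A program is a list of function bodies; function 0 is the entry point. *)
Definition program := list expr.

Fixpoint option_all (l : list (option Q)) : option (list Q) :=
  match l with
  | [] => Some []
  | None :: _ => None
  | Some x :: r =>
      match option_all r with Some xs => Some (x :: xs) | None => None end
  end.

Fixpoint eval (fuel : nat) (p : program) (env : list Q) (e : expr)
  : option Q :=
  match fuel with
  | O => None
  | S k =>
    match e with
    | EVar i => nth_error env i
    | EConst q => Some q
    | EAdd e1 e2 =>
        match eval k p env e1, eval k p env e2 with
        | Some x, Some y => Some (x + y)%Q | _, _ => None end
    | EMul e1 e2 =>
        match eval k p env e1, eval k p env e2 with
        | Some x, Some y => Some (x * y)%Q | _, _ => None end
    | EOpp e1 =>
        match eval k p env e1 with Some x => Some (- x)%Q | None => None end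
    | EInv e1 =>
        match eval k p env e1 with Some x => Some (/ x)%Q | None => None end
    | ELe e1 e2 =>
        match eval k p env e1, eval k p env e2 with
        | Some x, Some y => Some (if Qle_bool x y then 1%Q else 0%Q)
        | _, _ => None end
    | EIf c e1 e2 =>
        match eval k p env c with
        | Some x => if Qeq_bool x 0 then eval k p env e2 else eval k p env e1
        | None => None
        end
    | ECall f args =>
        match nth_error p f with
        | None => None
        | Some body =>
            match option_all (map (eval k p env) args) with
            | Some vs => eval k p vs body
            | None => None
            end
        end
    end
  end.

Definition run (fuel : nat) (p : program) (inputs : list Q) : option Q :=
  match nth_error p 0 with
  | Some body => eval fuel p inputs body
  | None => None
  end.

Definition halts (p : program) (inputs : list Q) : Prop :=
  exists (fuel : nat) (v : Q), run fuel p inputs = Some v.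

Definition re_set4 (P : Q -> Q -> Q -> Q -> Prop) : Prop :=
  exists p : program,
    forall lam t a b : Q, halts p [lam; t; a; b] <-> P lam t a b.

(* Main.v *)
Require Import Defs.
From Stdlib Require Import QArith Reals List Lia ZArith Qreals Lra.
From Coquelicot Require Import Coquelicot.
From Stdlib Require Import ClassicalEpsilon.
Import ListNotations.
Open Scope Q_scope.

Section EvalLemmas.
Variable p : program.


Lemma eval_eq k env e : eval (S k) p env e =
    match e with
    | EVar i => nth_error env i
    | EConst q => Some q
    | EAdd e1 e2 =>
        match eval k p env e1, eval k p env e2 with
        | Some x, Some y => Some (x + y)%Q | _, _ => None end
    | EMul e1 e2 =>
        match eval k p env e1, eval k p env e2 with
        | Some x, Some y => Some (x * y)%Q | _, _ => None end
    | EOpp e1 =>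
        match eval k p env e1 with Some x => Some (- x)%Q | None => None end
    | EInv e1 =>
        match eval k p env e1 with Some x => Some (/ x)%Q | None => None end
    | ELe e1 e2 =>
        match eval k p env e1, eval k p env e2 with
        | Some x, Some y => Some (if Qle_bool x y then 1%Q else 0%Q)
        | _, _ => None end
    | EIf c e1 e2 =>
        match eval k p env c with
        | Some x => if Qeq_bool x 0 then eval k p env e2 else eval k p env e1
        | None => None
        end
    | ECall f args =>
        match nth_error p f with
        | None => None
        | Some body =>
            match option_all (map (eval k p env) args) with
            | Some vs => eval k p vs body
            | None => None
            end
        end
    end.
Proof. reflexivity. Qed.

Lemma option_all_S k env (IH : forall env e v, eval k p env e = Some v -> eval (S k) p env e = Some v) :
  forall args vs, option_all (map (eval k p env) args) = Some vs ->
  option_all (map (eval (S k) p env) args) = Some vs.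
Proof.
  induction args as [|x args IHa]; cbn [map option_all]; intros vs H; [exact H|].
  destruct (eval k p env x) eqn:Ex; [|discriminate].
  rewrite (IH _ _ _ Ex).
  destruct (option_all (map (eval k p env) args)) eqn:Er; [|discriminate].
  rewrite (IHa _ eq_refl). exact H.
Qed.

Lemma eval_S : forall k env e v, eval k p env e = Some v -> eval (S k) p env e = Some v.
Proof.
  induction k as [|k IH]; intros env e v H; [discriminate|].
  destruct e as [i|q|e1 e2|e1 e2|e1|e1|e1 e2|c e1 e2|f args]; rewrite eval_eq in H |- *.
  - exact H.
  - exact H.
  - destruct (eval k p env e1) eqn:E1; [|discriminate].
    destruct (eval k p env e2) eqn:E2; [|discriminate].
    rewrite (IH _ _ _ E1), (IH _ _ _ E2). exact H.
  - destruct (eval k p env e1) eqn:E1; [|discriminate].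
    destruct (eval k p env e2) eqn:E2; [|discriminate].
    rewrite (IH _ _ _ E1), (IH _ _ _ E2). exact H.
  - destruct (eval k p env e1) eqn:E1; [|discriminate].
    rewrite (IH _ _ _ E1). exact H.
  - destruct (eval k p env e1) eqn:E1; [|discriminate].
    rewrite (IH _ _ _ E1). exact H.
  - destruct (eval k p env e1) eqn:E1; [|discriminate].
    destruct (eval k p env e2) eqn:E2; [|discriminate].
    rewrite (IH _ _ _ E1), (IH _ _ _ E2). exact H.
  - destruct (eval k p env c) eqn:E1; [|discriminate].
    rewrite (IH _ _ _ E1). destruct (Qeq_bool q 0); apply IH; exact H.
  - destruct (nth_error p f); [|discriminate].
    destruct (option_all (map (eval k p env) args)) eqn:E; [|discriminate].
    rewrite (option_all_S k env IH _ _ E). apply IH; exact H.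
Qed.

Lemma eval_mono k k' env e v : (k <= k')%nat -> eval k p env e = Some v -> eval k' p env e = Some v.
Proof. induction 1; auto using eval_S. Qed.

Lemma option_all_mono k k' env args vs : (k <= k')%nat ->
  option_all (map (eval k p env) args) = Some vs -> option_all (map (eval k' p env) args) = Some vs.
Proof. induction 1; auto. intros Hx. apply option_all_S; auto using eval_S. Qed.

Definition Ev env e v := exists k, eval k p env e = Some v.
Definition Evs env args vs := exists k, option_all (map (eval k p env) args) = Some vs.

Lemma ev_det env e v1 v2 k : Ev env e v1 -> eval k p env e = Some v2 -> v1 = v2.
Proof.
  intros [k1 H1] H2.
  pose proof (eval_mono k1 (max k1 k) env e v1 ltac:(lia) H1).
  pose proof (eval_mono k (max k1 k) env e v2 ltac:(lia) H2). congruence.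
Qed.

Lemma evs_det env es v1 v2 k : Evs env es v1 -> option_all (map (eval k p env) es) = Some v2 -> v1 = v2.
Proof.
  intros [k1 H1] H2.
  pose proof (option_all_mono k1 (max k1 k) env es v1 ltac:(lia) H1).
  pose proof (option_all_mono k (max k1 k) env es v2 ltac:(lia) H2). congruence.
Qed.

Lemma ev_var env i v : nth_error env i = Some v -> Ev env (EVar i) v.
Proof. intros H; exists 1%nat; exact H. Qed.
Lemma ev_const env q : Ev env (EConst q) q.
Proof. exists 1%nat; reflexivity. Qed.

Ltac two H1 H2 k1 k2 :=
  exists (S (max k1 k2)); rewrite eval_eq;
  rewrite (eval_mono k1 (max k1 k2) _ _ _ ltac:(lia) H1);
  rewrite (eval_mono k2 (max k1 k2) _ _ _ ltac:(lia) H2).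

Lemma ev_add env e1 e2 x y : Ev env e1 x -> Ev env e2 y -> Ev env (EAdd e1 e2) (x + y).
Proof. intros [k1 H1] [k2 H2]. two H1 H2 k1 k2. reflexivity. Qed.
Lemma ev_mul env e1 e2 x y : Ev env e1 x -> Ev env e2 y -> Ev env (EMul e1 e2) (x * y).
Proof. intros [k1 H1] [k2 H2]. two H1 H2 k1 k2. reflexivity. Qed.
Definition leQ (x y : Q) : Q := if Qle_bool x y then 1 else 0.
Lemma ev_le env e1 e2 x y : Ev env e1 x -> Ev env e2 y -> Ev env (ELe e1 e2) (leQ x y).
Proof. intros [k1 H1] [k2 H2]. two H1 H2 k1 k2. reflexivity. Qed.
Lemma ev_opp env e x : Ev env e x -> Ev env (EOpp e) (- x).
Proof. intros [k H]; exists (S k); rewrite eval_eq; rewrite H; reflexivity. Qed.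
Lemma ev_inv env e x : Ev env e x -> Ev env (EInv e) (/ x).
Proof. intros [k H]; exists (S k); rewrite eval_eq; rewrite H; reflexivity. Qed.
Lemma ev_if_t env c e1 e2 x v : Ev env c x -> Qeq_bool x 0 = false -> Ev env e1 v -> Ev env (EIf c e1 e2) v.
Proof. intros [k1 H1] Hx [k2 H2]. two H1 H2 k1 k2. rewrite Hx. reflexivity. Qed.
Lemma ev_if_f env c e1 e2 x v : Ev env c x -> Qeq_bool x 0 = true -> Ev env e2 v -> Ev env (EIf c e1 e2) v.
Proof. intros [k1 H1] Hx [k2 H2]. two H1 H2 k1 k2. rewrite Hx. reflexivity. Qed.
Lemma evs_nil env : Evs env [] [].
Proof. exists 0%nat; reflexivity. Qed.
Lemma evs_cons env e es v vs : Ev env e v -> Evs env es vs -> Evs env (e :: es) (v :: vs).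
Proof.
  intros [k1 H1] [k2 H2]. exists (max k1 k2). cbn [map option_all].
  rewrite (eval_mono k1 (max k1 k2) _ _ _ ltac:(lia) H1).
  rewrite (option_all_mono k2 (max k1 k2) _ _ _ ltac:(lia) H2). reflexivity.
Qed.
Lemma ev_call env f args body vs v : nth_error p f = Some body -> Evs env args vs -> Ev vs body v ->
  Ev env (ECall f args) v.
Proof.
  intros Hb [k1 H1] [k2 H2]. exists (S (max k1 k2)). rewrite eval_eq. rewrite Hb.
  rewrite (option_all_mono k1 (max k1 k2) _ _ _ ltac:(lia) H1).
  exact (eval_mono k2 (max k1 k2) _ _ _ ltac:(lia) H2).
Qed.

Lemma inv_if k env c e1 e2 v : eval (S k) p env (EIf c e1 e2) = Some v ->
  exists x, eval k p env c = Some x /\ (if Qeq_bool x 0 then eval k p env e2 else eval k p env e1) = Some v.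
Proof. rewrite eval_eq. destruct (eval k p env c); [|discriminate]. intros H; eauto. Qed.
Lemma inv_call k env f args v : eval (S k) p env (ECall f args) = Some v ->
  exists body vs, nth_error p f = Some body /\ option_all (map (eval k p env) args) = Some vs /\ eval k p vs body = Some v.
Proof.
  rewrite eval_eq. destruct (nth_error p f); [|discriminate].
  destruct (option_all (map (eval k p env) args)); [|discriminate]. intros H; eauto.
Qed.
End EvalLemmas.

Definition LOOP := ECall 3 [].
Definition body0 := EIf (ELe (EVar 0) (EConst 0)) LOOP
  (EIf (ELe (EConst 1) (EVar 0)) LOOP (ECall 1 [EConst 0; EVar 0; EVar 1; EVar 2; EVar 3])).
Definition body1 := EIf (ECall 2 [EVar 0; EConst 0; EConst 1; EVar 1; EVar 2; EVar 3; EVar 4]) (EConst 0)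
  (ECall 1 [EAdd (EVar 0) (EConst 1); EVar 1; EVar 2; EVar 3; EVar 4]).
Definition Cexpr := EInv (EAdd (EConst 1) (EOpp (EVar 3))).
Definition Aexpr := EAdd (EVar 1) (EMul (EVar 2) (EMul (EVar 5) Cexpr)).
Definition Bexpr := EAdd (EVar 1) (EMul (EVar 2) (EMul (EVar 6) Cexpr)).
Definition one_minus e := EAdd (EConst 1) (EOpp e).
Definition EXCL := EAdd (EMul (one_minus (ELe Aexpr (EVar 4))) (one_minus (ELe Bexpr (EVar 4))))
                        (EMul (one_minus (ELe (EVar 4) Aexpr)) (one_minus (ELe (EVar 4) Bexpr))).
Definition rec_args (x : Defs.expr) := [EAdd (EVar 0) (EOpp (EConst 1)); EAdd (EVar 1) (EMul x (EVar 2));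
   EMul (EVar 2) (EVar 3); EVar 3; EVar 4; EVar 5; EVar 6].
Definition body2 := EIf (EVar 0) (EMul (ECall 2 (rec_args (EVar 5))) (ECall 2 (rec_args (EVar 6)))) EXCL.
Definition P : program := [body0; body1; body2; LOOP].

Lemma loop_none k env : eval k P env LOOP = None.
Proof.
  revert env; induction k as [|k IH]; intros env; [reflexivity|].
  unfold LOOP; rewrite eval_eq. simpl nth_error. cbn [map option_all]. apply IH.
Qed.

Definition nQ (m : nat) : Q := inject_Z (Z.of_nat m).
Lemma nQ_S m : nQ (S m) == nQ m + 1.
Proof. unfold nQ. rewrite Nat2Z.inj_succ, <- Z.add_1_r, inject_Z_plus. reflexivity. Qed.

Section Mirror.
Variables lam t a b : Q.

Definition cQ := / (1 + - lam).
Definition AQ s p := s + p * (a * cQ).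
Definition BQ s p := s + p * (b * cQ).
Definition om x := 1 + - x.
Definition exclQ s p := om (leQ (AQ s p) t) * om (leQ (BQ s p) t) + om (leQ t (AQ s p)) * om (leQ t (BQ s p)).
Fixpoint checkQ m s p := match m with
  | O => exclQ s p
  | S m => checkQ m (s + a * p) (p * lam) * checkQ m (s + b * p) (p * lam) end.

Ltac ev_solve := repeat first [ eapply ev_add | eapply ev_mul | eapply ev_opp | eapply ev_inv
   | eapply ev_le | eapply ev_const | (eapply ev_var; reflexivity) ].
Ltac evs_solve := repeat (eapply evs_cons; [ev_solve|]); apply evs_nil.

Lemma excl_ev n s p : Ev P [n; s; p; lam; t; a; b] EXCL (exclQ s p).
Proof.
  unfold EXCL, exclQ, one_minus, om, Aexpr, Bexpr, AQ, BQ, Cexpr, cQ. ev_solve.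
Qed.

Lemma check_ev m : forall n s p, n == nQ m -> Ev P [n; s; p; lam; t; a; b] body2 (checkQ m s p).
Proof.
  induction m as [|m IH]; intros n s p Hn.
  - eapply ev_if_f. apply ev_var; reflexivity. apply Qeq_bool_iff. rewrite Hn. reflexivity.
    apply excl_ev.
  - eapply ev_if_t. apply ev_var; reflexivity.
    + apply not_true_is_false. intros H. apply Qeq_bool_iff in H. rewrite Hn in H.
      unfold nQ, Qeq in H; simpl in H. lia.
    + cbn [checkQ]. apply ev_mul.
      * eapply ev_call. reflexivity. unfold rec_args. evs_solve.
        apply IH. rewrite Hn, nQ_S. ring.
      * eapply ev_call. reflexivity. unfold rec_args. evs_solve.
        apply IH. rewrite Hn, nQ_S. ring.
Qed.

Definition nz q := Qeq_bool q 0 = false.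

Lemma search_sound : forall k n m v, n == nQ m -> eval k P [n; lam; t; a; b] body1 = Some v ->
  exists m', nz (checkQ m' 0 1).
Proof.
  induction k as [|k IH]; intros n m v Hn H; [discriminate|].
  apply inv_if in H as [x [Hx H]].
  assert (Ec : Ev P [n; lam; t; a; b] (ECall 2 [EVar 0; EConst 0; EConst 1; EVar 1; EVar 2; EVar 3; EVar 4]) (checkQ m 0 1)).
  { eapply ev_call. reflexivity. evs_solve. apply check_ev. exact Hn. }
  pose proof (ev_det _ _ _ _ _ _ Ec Hx) as <-.
  destruct (Qeq_bool (checkQ m 0 1) 0) eqn:Ez; [|exists m; exact Ez].
  destruct k as [|k]; [discriminate|].
  apply inv_call in H as [body [vs [Hb [Hvs H]]]].
  injection Hb as <-.
  assert (Es : Evs P [n; lam; t; a; b] [EAdd (EVar 0) (EConst 1); EVar 1; EVar 2; EVar 3; EVar 4] [n + 1; lam; t; a; b]).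
  { evs_solve. }
  pose proof (evs_det _ _ _ _ _ _ Es Hvs) as <-.
  apply (IH (n + 1) (S m) v). rewrite Hn, nQ_S. reflexivity. apply eval_S. exact H.
Qed.

Lemma search_complete : forall d n m, n == nQ m -> nz (checkQ (m + d) 0 1) -> Ev P [n; lam; t; a; b] body1 0.
Proof.
  induction d as [|d IH]; intros n m Hn Hz.
  - eapply ev_if_t. eapply ev_call. reflexivity. evs_solve. apply check_ev. exact Hn.
    rewrite Nat.add_0_r in Hz. exact Hz. apply ev_const.
  - destruct (Qeq_bool (checkQ m 0 1) 0) eqn:Ez.
    + eapply ev_if_f. eapply ev_call. reflexivity. evs_solve. apply check_ev. exact Hn. exact Ez.
      eapply ev_call. reflexivity. evs_solve. apply (IH _ (S m)). rewrite Hn, nQ_S. reflexivity.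
      replace (S m + d)%nat with (m + S d)%nat by lia. exact Hz.
    + eapply ev_if_t. eapply ev_call. reflexivity. evs_solve. apply check_ev. exact Hn.
      exact Ez. apply ev_const.
Qed.

End Mirror.

Open Scope R_scope.

Section Real.
Variables lam t a b : Q.
Hypothesis Hv : tds_valid_instance lam.
Let l := Q2R lam.
Let al := Q2R a.
Let be := Q2R b.
Let tr := Q2R t.

Lemma l_pos : 0 < l.
Proof. destruct Hv as [H _]. apply Qlt_Rlt in H. rewrite RMicromega.Q2R_0 in H. exact H. Qed.
Lemma l_lt1 : l < 1.
Proof. destruct Hv as [_ H]. apply Qlt_Rlt in H. rewrite RMicromega.Q2R_1 in H. exact H. Qed.
Lemma l_abs : Rabs l < 1.
Proof. pose proof l_pos; pose proof l_lt1. rewrite Rabs_right; lra. Qed.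

Definition wr (w : nat -> bool) i := Q2R (tds_weight a b w i).
Definition term w i := wr w i * l ^ i.
Definition V w := Series (term w).

Lemma geom_Series k : Series (fun n => k * l ^ n) = k * / (1 - l).
Proof. rewrite Series_scal_l. f_equal. apply is_series_unique, is_series_geom, l_abs. Qed.
Lemma ex_geom k : ex_series (fun n => k * l ^ n).
Proof. apply (ex_series_scal_l k (fun n => l ^ n)). apply ex_series_geom, l_abs. Qed.

Lemma wr_bounds w i : Rmin al be <= wr w i <= Rmax al be.
Proof.
  unfold wr, tds_weight. destruct (w i); fold al be;
  split; auto using Rmin_l, Rmin_r, Rmax_l, Rmax_r.
Qed.

Lemma ex_V w : ex_series (term w).
Proof.
  apply (@ex_series_le R_AbsRing R_CompleteNormedModule) with (b := fun n => (Rabs al + Rabs be) * l ^ n); [|apply ex_geom].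
  intros n. change (norm (term w n)) with (Rabs (term w n)). unfold term.
  rewrite Rabs_mult. rewrite (Rabs_right (l ^ n)) by (left; apply pow_lt, l_pos).
  apply Rmult_le_compat_r. left; apply pow_lt, l_pos.
  unfold wr, tds_weight. destruct (w n); fold al be.
  pose proof (Rabs_pos be); lra. pose proof (Rabs_pos al); lra.
Qed.

Lemma V_shift w : V w = wr w 0 + l * V (fun i => w (S i)).
Proof.
  unfold V. rewrite Series_incr_1 by apply ex_V. unfold term at 1. simpl pow. rewrite Rmult_1_r.
  f_equal. rewrite <- Series_scal_l. apply Series_ext. intros n. unfold term, wr, tds_weight. simpl. ring.
Qed.

Lemma V_bounds w : Rmin al be * / (1 - l) <= V w <= Rmax al be * / (1 - l).
Proof.
  pose proof (ex_V w) as E.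
  set (m := Rmin al be). set (M := Rmax al be).
  assert (Hb : forall n, m <= wr w n <= M) by (intros; apply wr_bounds).
  assert (Hp : forall n, 0 < l ^ n) by (intros; apply pow_lt, l_pos).
  split.
  - assert (H := Series_le (fun n => M * l ^ n - term w n) (fun n => (M - m) * l ^ n)).
    rewrite Series_minus in H by (apply ex_geom || apply E).
    rewrite !geom_Series in H. fold (V w) in H.
    assert (Hc : 0 < / (1 - l)) by (apply Rinv_0_lt_compat; pose proof l_lt1; lra).
    cut (M * / (1 - l) - V w <= (M - m) * / (1 - l)). { intros; nra. }
    apply H; [|apply ex_geom]. intros n. unfold term. specialize (Hb n); specialize (Hp n). split; nra.
  - assert (H := Series_le (fun n => term w n - m * l ^ n) (fun n => (M - m) * l ^ n)).
    rewrite Series_minus in H by (apply ex_geom || apply E).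
    rewrite !geom_Series in H. fold (V w) in H.
    cut (V w - m * / (1 - l) <= (M - m) * / (1 - l)). { intros; nra. }
    apply H; [|apply ex_geom]. intros n. unfold term. specialize (Hb n); specialize (Hp n). split; nra.
Qed.


Let c := / (1 - l).
Definition Ar s p := Q2R s + Q2R p * (al * c).
Definition Br s p := Q2R s + Q2R p * (be * c).
Definition outside x y := (tr < x /\ tr < y) \/ (x < tr /\ y < tr).

Lemma Q2R_cQ : Q2R (cQ lam) = c.
Proof.
  unfold cQ. rewrite Q2R_inv. rewrite Q2R_plus, Q2R_opp, RMicromega.Q2R_1. reflexivity.
  intros H. apply Qeq_eqR in H. rewrite Q2R_plus, Q2R_opp, RMicromega.Q2R_1, RMicromega.Q2R_0 in H.
  pose proof l_lt1. fold l in H. lra.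
Qed.

Lemma qle_real x y : if Qle_bool x y then Q2R x <= Q2R y else Q2R y < Q2R x.
Proof.
  destruct (Qle_bool x y) eqn:E. apply RMicromega.Qle_true; exact E.
  apply Qlt_Rlt. apply Qnot_le_lt. intros H. apply Qle_bool_iff in H. congruence.
Qed.

Lemma excl_real s p : nz (exclQ lam t a b s p) <-> outside (Ar s p) (Br s p).
Proof.
  assert (EA : Q2R (AQ lam a s p) = Ar s p).
  { unfold AQ, Ar. rewrite Q2R_plus, !Q2R_mult, Q2R_cQ. reflexivity. }
  assert (EB : Q2R (BQ lam b s p) = Br s p).
  { unfold BQ, Br. rewrite Q2R_plus, !Q2R_mult, Q2R_cQ. reflexivity. }
  unfold nz, outside, exclQ, leQ.
  pose proof (qle_real (AQ lam a s p) t) as H1.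
  pose proof (qle_real (BQ lam b s p) t) as H2.
  pose proof (qle_real t (AQ lam a s p)) as H3.
  pose proof (qle_real t (BQ lam b s p)) as H4.
  rewrite EA, EB in *. fold tr in H1, H2, H3, H4.
  destruct (Qle_bool (AQ lam a s p) t), (Qle_bool (BQ lam b s p) t),
    (Qle_bool t (AQ lam a s p)), (Qle_bool t (BQ lam b s p));
  (split; [intros HH; (discriminate || (first [left; split; lra | right; split; lra]))
          | intros HH; (reflexivity || (exfalso; lra))]).
Qed.

Lemma nz_mult x y : nz (x * y) <-> nz x /\ nz y.
Proof.
  unfold nz. split.
  - intros H. apply RMicromega.Qeq_false in H. rewrite Q2R_mult, RMicromega.Q2R_0 in H.
    split; apply not_true_is_false; intros E; apply RMicromega.Qeq_true in E;
    rewrite RMicromega.Q2R_0 in E; rewrite E in H; lra.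
  - intros [H1 H2]. apply RMicromega.Qeq_false in H1, H2. rewrite RMicromega.Q2R_0 in H1, H2.
    apply not_true_is_false; intros E; apply RMicromega.Qeq_true in E.
    rewrite Q2R_mult, RMicromega.Q2R_0 in E. apply Rmult_integral in E. tauto.
Qed.

Lemma sound m : forall s p w, 0 <= Q2R p -> nz (checkQ lam t a b m s p) -> Q2R s + Q2R p * V w <> tr.
Proof.
  induction m as [|m IH]; intros s p w Hp Hz.
  - apply excl_real in Hz. unfold outside, Ar, Br in Hz. fold c in Hz.
    pose proof (V_bounds w) as [Hl Hu]. fold c al be in Hl, Hu.
    destruct (Rle_dec al be) as [Hab|Hab].
    + rewrite Rmin_left in Hl by lra. rewrite Rmax_right in Hu by lra.
      pose proof (Rmult_le_compat_l _ _ _ Hp Hl). pose proof (Rmult_le_compat_l _ _ _ Hp Hu). lra.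
    + rewrite Rmin_right in Hl by lra. rewrite Rmax_left in Hu by lra.
      pose proof (Rmult_le_compat_l _ _ _ Hp Hl). pose proof (Rmult_le_compat_l _ _ _ Hp Hu). lra.
  - cbn [checkQ] in Hz. apply nz_mult in Hz as [Z1 Z2].
    assert (Hp' : 0 <= Q2R (p * lam)) by (rewrite Q2R_mult; pose proof l_pos; fold l; nra).
    rewrite V_shift. unfold wr, tds_weight. destruct (w 0%nat) eqn:Ew.
    + pose proof (IH _ _ (fun i => w (S i)) Hp' Z1) as H.
      rewrite Q2R_plus, !Q2R_mult in H. fold l al be tr in H |- *. intros E; apply H. rewrite <- E. ring.
    + pose proof (IH _ _ (fun i => w (S i)) Hp' Z2) as H.
      rewrite Q2R_plus, !Q2R_mult in H. fold l al be tr in H |- *. intros E; apply H. rewrite <- E. ring.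
Qed.


Lemma c_eq : c * (1 - l) = 1.
Proof. unfold c. pose proof l_lt1. field. lra. Qed.

Lemma excl_mono s p : nz (exclQ lam t a b s p) ->
  nz (exclQ lam t a b (s + a * p) (p * lam)) /\ nz (exclQ lam t a b (s + b * p) (p * lam)).
Proof.
  rewrite !excl_real. unfold outside, Ar, Br. rewrite !Q2R_plus, !Q2R_mult. fold l al be.
  set (S := Q2R s). set (Pp := Q2R p). pose proof l_pos. pose proof l_lt1. pose proof c_eq as Hc.
  assert (E1 : S + al * Pp + Pp * l * (al * c) = S + Pp * (al * c)).
  { apply Rminus_diag_uniq. replace (S + al * Pp + Pp * l * (al * c) - (S + Pp * (al * c)))
      with (Pp * al * (1 - c * (1 - l))) by ring. rewrite Hc. ring. }
  assert (E2 : S + al * Pp + Pp * l * (be * c) = (1 - l) * (S + Pp * (al * c)) + l * (S + Pp * (be * c))).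
  { apply Rminus_diag_uniq. replace (S + al * Pp + Pp * l * (be * c) - ((1 - l) * (S + Pp * (al * c)) + l * (S + Pp * (be * c))))
      with (Pp * al * (1 - c * (1 - l))) by ring. rewrite Hc. ring. }
  assert (E3 : S + be * Pp + Pp * l * (al * c) = (1 - l) * (S + Pp * (be * c)) + l * (S + Pp * (al * c))).
  { apply Rminus_diag_uniq. replace (S + be * Pp + Pp * l * (al * c) - ((1 - l) * (S + Pp * (be * c)) + l * (S + Pp * (al * c))))
      with (Pp * be * (1 - c * (1 - l))) by ring. rewrite Hc. ring. }
  assert (E4 : S + be * Pp + Pp * l * (be * c) = S + Pp * (be * c)).
  { apply Rminus_diag_uniq. replace (S + be * Pp + Pp * l * (be * c) - (S + Pp * (be * c)))
      with (Pp * be * (1 - c * (1 - l))) by ring. rewrite Hc. ring. }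
  rewrite E1, E2, E3, E4.
  set (X := S + Pp * (al * c)). set (Y := S + Pp * (be * c)).
  intros [[H1 H2]|[H1 H2]].
  - split; left; split; try lra; nra.
  - split; right; split; try lra; nra.
Qed.

Lemma check_mono m : forall s p, nz (checkQ lam t a b m s p) -> nz (checkQ lam t a b (S m) s p).
Proof.
  induction m as [|m IH]; intros s p H.
  - cbn [checkQ]. apply nz_mult. apply excl_mono. exact H.
  - cbn [checkQ] in H |- *. apply nz_mult in H as [H1 H2].
    apply nz_mult. split; apply IH; assumption.
Qed.

Lemma check_lift m m' s p : (m <= m')%nat -> nz (checkQ lam t a b m s p) -> nz (checkQ lam t a b m' s p).
Proof. induction 1; auto using check_mono. Qed.

Definition good s p := forall m, Qeq_bool (checkQ lam t a b m s p) 0 = true.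

Lemma not_good s p : ~ good s p -> exists m, nz (checkQ lam t a b m s p).
Proof.
  intros H. apply Classical_Pred_Type.not_all_ex_not in H as [m Hm].
  exists m. apply not_true_is_false. exact Hm.
Qed.

Lemma good_split s p : good s p -> good (s + a * p) (p * lam) \/ good (s + b * p) (p * lam).
Proof.
  intros G. destruct (Classical_Prop.classic (good (s + a * p) (p * lam))) as [Ga|Ga]; [left; exact Ga|].
  destruct (Classical_Prop.classic (good (s + b * p) (p * lam))) as [Gb|Gb]; [right; exact Gb|].
  apply not_good in Ga as [m1 H1]. apply not_good in Gb as [m2 H2].
  exfalso. specialize (G (S (max m1 m2))). cbn [checkQ] in G.
  assert (nz (checkQ lam t a b (max m1 m2) (s + a * p) (p * lam) * checkQ lam t a b (max m1 m2) (s + b * p) (p * lam))).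
  { apply nz_mult. split; [apply (check_lift m1); [apply Nat.le_max_l | exact H1] | apply (check_lift m2); [apply Nat.le_max_r | exact H2]]. }
  unfold nz in H. congruence.
Qed.


Definition step (st : Q * Q) : bool :=
  if excluded_middle_informative (good (fst st + a * snd st)%Q (snd st * lam)%Q) then true else false.
Fixpoint state (k : nat) : Q * Q :=
  match k with
  | O => (0%Q, 1%Q)
  | S k => ((fst (state k) + (if step (state k) then a else b) * snd (state k))%Q, (snd (state k) * lam)%Q)
  end.
Definition wsol k := step (state k).

Lemma state_S k : state (S k) =
  ((fst (state k) + (if wsol k then a else b) * snd (state k))%Q, (snd (state k) * lam)%Q).
Proof. reflexivity. Qed.

Lemma state_good : good 0 1 -> forall k, good (fst (state k)) (snd (state k)).
Proof.
  intros G0. induction k as [|k IH]; [exact G0|].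
  rewrite state_S. cbn [fst snd]. unfold wsol, step.
  destruct (excluded_middle_informative _) as [G|G]; [exact G|].
  destruct (good_split _ _ IH) as [G'|G']; [contradiction | exact G'].
Qed.

Lemma state_p k : Q2R (snd (state k)) = l ^ k.
Proof.
  induction k as [|k IH]. apply RMicromega.Q2R_1.
  rewrite state_S. cbn [fst snd]. rewrite Q2R_mult, IH. simpl. fold l. ring.
Qed.

Lemma state_s n : Q2R (fst (state (S n))) = sum_f_R0 (term wsol) n.
Proof.
  induction n as [|n IH].
  - rewrite state_S. cbn [fst snd sum_f_R0]. rewrite Q2R_plus, Q2R_mult, state_p.
    unfold term, wr, tds_weight. simpl state. cbn [fst snd]. rewrite RMicromega.Q2R_0. simpl. ring.
  - rewrite (state_S (S n)). cbn [fst snd]. rewrite Q2R_plus, Q2R_mult, IH, state_p.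
    cbn [sum_f_R0]. f_equal.
Qed.

Lemma between_bound s p : 0 <= Q2R p -> ~ outside (Ar s p) (Br s p) ->
  Rabs (Q2R s - tr) <= Q2R p * (c * (Rabs al + Rabs be)).
Proof.
  intros Hp Hno. unfold outside, Ar, Br in Hno.
  assert (Hc : 0 < c) by (unfold c; apply Rinv_0_lt_compat; pose proof l_lt1; lra).
  assert (HA : Rabs (Q2R p * (al * c)) <= Q2R p * (c * Rabs al)).
  { rewrite !Rabs_mult, (Rabs_right (Q2R p)), (Rabs_right c) by lra. lra. }
  assert (HB : Rabs (Q2R p * (be * c)) <= Q2R p * (c * Rabs be)).
  { rewrite !Rabs_mult, (Rabs_right (Q2R p)), (Rabs_right c) by lra. lra. }
  pose proof (Rle_abs (Q2R p * (al * c))). pose proof (Rabs_maj2 (Q2R p * (al * c))).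
  pose proof (Rle_abs (Q2R p * (be * c))). pose proof (Rabs_maj2 (Q2R p * (be * c))).
  pose proof (Rabs_pos al). pose proof (Rabs_pos be).
  apply Rabs_le.
  destruct (Rlt_dec tr (Q2R s + Q2R p * (al * c))), (Rlt_dec tr (Q2R s + Q2R p * (be * c)));
  try (exfalso; apply Hno; left; split; assumption);
  destruct (Rlt_dec (Q2R s + Q2R p * (al * c)) tr), (Rlt_dec (Q2R s + Q2R p * (be * c)) tr);
  try (exfalso; apply Hno; right; split; assumption);
  split; nra.
Qed.

Lemma complete : good 0 1 -> tds_solution lam t a b wsol.
Proof.
  intros G0. unfold tds_solution. fold l tr. change (infinite_sum (term wsol) tr).
  intros eps Heps.
  assert (Hc : 0 < c) by (unfold c; apply Rinv_0_lt_compat; pose proof l_lt1; lra).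
  set (K := c * (Rabs al + Rabs be)).
  assert (HK : 0 <= K) by (unfold K; pose proof (Rabs_pos al); pose proof (Rabs_pos be); nra).
  destruct (pow_lt_1_zero l l_abs (eps / (K + 1))) as [N HN].
  { apply Rdiv_lt_0_compat; lra. }
  exists N. intros n Hn. unfold R_dist. rewrite <- state_s.
  assert (Hb : Rabs (Q2R (fst (state (S n))) - tr) <= l ^ (S n) * K).
  { rewrite <- state_p. apply between_bound.
    - rewrite state_p. left; apply pow_lt, l_pos.
    - rewrite <- excl_real. unfold nz. pose proof (state_good G0 (S n) 0%nat) as HG. cbn [checkQ] in HG. rewrite HG. discriminate. }
  specialize (HN (S n) ltac:(lia)).
  rewrite Rabs_right in HN by (left; apply pow_lt, l_pos).
  assert (l ^ S n * (K + 1) < eps).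
  { apply Rmult_lt_compat_r with (r := K + 1) in HN; [|lra].
    unfold Rdiv in HN. rewrite Rmult_assoc, Rinv_l, Rmult_1_r in HN by lra. exact HN. }
  pose proof (pow_lt l (S n) l_pos). nra.
Qed.

End Real.

Ltac ev_solve := repeat first [ eapply ev_add | eapply ev_mul | eapply ev_opp | eapply ev_inv
   | eapply ev_le | eapply ev_const | (eapply ev_var; reflexivity) ].
Ltac evs_solve := repeat (eapply evs_cons; [ev_solve|]); apply evs_nil.

Theorem proposition11 :
  re_set4 (fun lam t a b =>
    tds_valid_instance lam /\ ~ tds_has_solution lam t a b).
Proof.
  exists P. intros lam t a b. split.
  - intros [k [v H]]. unfold run in H.
    change (eval k P [lam; t; a; b] body0 = Some v) in H.
    destruct k as [|k]; [discriminate|].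
    apply inv_if in H as [x [Hx H]].
    assert (E0 : Ev P [lam; t; a; b] (ELe (EVar 0) (EConst 0)) (leQ lam 0)) by ev_solve.
    pose proof (ev_det _ _ _ _ _ _ E0 Hx) as <-.
    destruct (Qeq_bool (leQ lam 0) 0) eqn:E1; [| rewrite loop_none in H; discriminate].
    assert (Hl0 : (0 < lam)%Q).
    { unfold leQ in E1. destruct (Qle_bool lam 0) eqn:E; [vm_compute in E1; discriminate|].
      apply Qnot_le_lt. intros Hle. apply Qle_bool_iff in Hle. congruence. }
    destruct k as [|k]; [discriminate|].
    apply inv_if in H as [x [Hx' H]].
    assert (E0' : Ev P [lam; t; a; b] (ELe (EConst 1) (EVar 0)) (leQ 1 lam)) by ev_solve.
    pose proof (ev_det _ _ _ _ _ _ E0' Hx') as <-.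
    destruct (Qeq_bool (leQ 1 lam) 0) eqn:E2; [| rewrite loop_none in H; discriminate].
    assert (Hl1 : (lam < 1)%Q).
    { unfold leQ in E2. destruct (Qle_bool 1 lam) eqn:E; [vm_compute in E2; discriminate|].
      apply Qnot_le_lt. intros Hle. apply Qle_bool_iff in Hle. congruence. }
    destruct k as [|k]; [discriminate|].
    apply inv_call in H as [body [vs [Hb [Hvs H]]]].
    injection Hb as <-.
    assert (Es : Evs P [lam; t; a; b] [EConst 0; EVar 0; EVar 1; EVar 2; EVar 3] [0%Q; lam; t; a; b]) by evs_solve.
    pose proof (evs_det _ _ _ _ _ _ Es Hvs) as <-.
    destruct (search_sound lam t a b k 0 0 v (Qeq_refl _) H) as [m Hm].
    assert (Hv : tds_valid_instance lam) by (split; assumption).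
    split; [exact Hv|].
    intros [w Hw]. unfold tds_solution in Hw. apply is_series_Reals, is_series_unique in Hw.
    apply (sound lam t a b Hv m 0 1 w).
    + rewrite RMicromega.Q2R_1. lra.
    + exact Hm.
    + rewrite RMicromega.Q2R_0, RMicromega.Q2R_1. unfold V, term, wr. rewrite Rmult_1_l, Rplus_0_l. exact Hw.
  - intros [Hv Hns].
    assert (Hm : exists m, nz (checkQ lam t a b m 0 1)).
    { destruct (Classical_Prop.classic (good lam t a b 0 1)) as [G|G].
      - exfalso. apply Hns. exists (wsol lam t a b). apply complete; assumption.
      - apply not_good in G. exact G. }
    destruct Hm as [m Hm].
    assert (Ev P [lam; t; a; b] body0 0).
    { destruct Hv as [Hl0 Hl1]. unfold body0.
      eapply ev_if_f. ev_solve.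
      { unfold leQ. destruct (Qle_bool lam 0) eqn:E; [|reflexivity].
        apply Qle_bool_iff in E. exfalso. apply (Qlt_not_le _ _ Hl0 E). }
      eapply ev_if_f. ev_solve.
      { unfold leQ. destruct (Qle_bool 1 lam) eqn:E; [|reflexivity].
        apply Qle_bool_iff in E. exfalso. apply (Qlt_not_le _ _ Hl1 E). }
      eapply ev_call. reflexivity. evs_solve.
      apply (search_complete lam t a b m 0 0). reflexivity. exact Hm. }
    destruct H as [k Hk]. exists k, 0%Q. exact Hk.
Qed.
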